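(* Let $f:2^V\to\mathbb{R}_+$ be nonnegative and let $g:2^V\to\mathbb{R}$ be defined by $g(S)=f(S)-f(\emptyset)$ for all $S\subseteq V$. Then: (i) $f(T)/f(S)\le g(T)/g(S)$ for all $S,T\subseteq V$ with $f(S)\le f(T)$ (whenever these quotients are defined); (ii) $g$ is nonnegative and monotone if $f$ is monotone; (iii) $g$ is supermodular if $f$ is supermodular; (iv) $g$ is $r$-decomposable if $f$ is monotone, supermodular and $r$-decomposable.
   Context: $V$ is a finite set. Supermodular: $h(A)+h(B)\le h(A\cup B)+h(A\cap B)$ for all $A,B$; monotone: $h(B)\le h(A)$ for $B\subseteq A$. A function $h$ on $2^V$ is $r$-decomposable if there exist subsets $V_1,\dots,V_m\subseteq V$ with $|V_i|\le r$ and nonnegative supermodular functions $h_i:2^{V_i}\to\mathbb{R}_+$ such that $h(S)=\sum_{i=1}^m h_i(S\cap V_i)$ for all $S\subseteq V$. *)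

(* Defs.v *)
From mathcomp Require Import all_boot all_order all_algebra.
Set Implicit Arguments. Unset Strict Implicit. Unset Printing Implicit Defensive.
Import Order.TTheory GRing.Theory Num.Theory.
Local Open Scope ring_scope.

Definition nonneg_setfun (V : finType) (R : realFieldType) (h : {set V} -> R) :=
  forall S : {set V}, 0 <= h S.

Definition monotone_setfun (V : finType) (R : realFieldType) (h : {set V} -> R) :=
  forall A B : {set V}, B \subset A -> h B <= h A.

Definition supermodular (V : finType) (R : realFieldType) (h : {set V} -> R) :=
  forall A B : {set V}, h A + h B <= h (A :|: B) + h (A :&: B).

(* r-decomposable: h S = \sum_i h_i (S \cap V_i), |V_i| <= r, each h_i a
   nonnegative supermodular function on 2^{V_i} (modelled as a function on
   {set V} of which only the values on subsets of V_i matter). *)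
Definition decomposable (V : finType) (R : realFieldType) (r : nat)
    (h : {set V} -> R) :=
  exists (m : nat) (Vs : 'I_m -> {set V}) (hs : 'I_m -> {set V} -> R),
    [/\ forall i, (#|Vs i| <= r)%N,
        forall i (A : {set V}), A \subset Vs i -> 0 <= hs i A,
        forall i (A B : {set V}), A \subset Vs i -> B \subset Vs i ->
          hs i A + hs i B <= hs i (A :|: B) + hs i (A :&: B)
      & forall S : {set V}, h S = \sum_(i < m) hs i (S :&: Vs i)].

(* Main.v *)
Require Import Defs.
From mathcomp Require Import all_boot all_order all_algebra.
From mathcomp Require Import ring lra.
Import Order.TTheory GRing.Theory Num.Theory.
Local Open Scope ring_scope.

Lemma sum_modular (T : finType) (R : realFieldType) (c : T -> R) (A B : {set T}) :
  \sum_(v in A) c v + \sum_(v in B) c v =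
  \sum_(v in A :|: B) c v + \sum_(v in A :&: B) c v.
Proof.
have H1 : \sum_(v in A :|: B) c v = \sum_(v in (A :|: B) :&: A) c v + \sum_(v in (A :|: B) :\: A) c v by apply: big_setID.
have H2 : \sum_(v in B) c v = \sum_(v in B :&: A) c v + \sum_(v in B :\: A) c v by apply: big_setID.
rewrite /= setUK setDUl setDv set0U in H1.
rewrite /= setIC in H2.
rewrite H1 H2. ring.
Qed.

Lemma q_nonneg (T : finType) (R : realFieldType) (h : {set T} -> R) (W : {set T})
  (hsup : forall A B : {set T}, A \subset W -> B \subset W -> h A + h B <= h (A :|: B) + h (A :&: B)) :
  forall A : {set T}, A \subset W ->
  0 <= h A - h set0 - \sum_(v in A) (h ([set v] :&: W) - h set0).
Proof.
move=> A; move: {2}#|A| (erefl #|A|) => n; elim: n A => [|n IH] A hn AW.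
  have /eqP -> : A == set0 by rewrite -cards_eq0 hn.
  by rewrite big_set0 subrr subr0.
have [v vA] : exists v, v \in A.
  by apply/set0Pn; rewrite -card_gt0 hn.
have AvW : A :\ v \subset W by apply: subset_trans AW; apply: subD1set.
have vW : v \in W by apply: (subsetP AW).
have hv : [set v] :&: W = [set v].
  by apply/setIidPl; rewrite sub1set.
rewrite (cardsD1 v A) vA add1n in hn.
case: hn => hn.
have H := IH _ hn AvW.
have v1 : [set v] \subset W by rewrite sub1set.
have S := hsup (A :\ v) [set v] AvW v1.
rewrite setUC setD1K // in S.
have E : (A :\ v) :&: [set v] = set0.
  by apply/setP => x; rewrite !inE; case: (x == v); rewrite ?andbF ?andbT.
rewrite E in S.
rewrite (big_setD1 v vA) /= hv.
lra.
Qed.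

Theorem proposition2 (V : finType) (R : realFieldType) (f : {set V} -> R)
    (f_nonneg : nonneg_setfun f) :
  let g := fun S : {set V} => f S - f set0 in
  [/\ (forall S T : {set V}, f S <= f T -> 0 < g S ->
         f T / f S <= g T / g S),
      (monotone_setfun f -> nonneg_setfun g /\ monotone_setfun g),
      (supermodular f -> supermodular g)
    & forall r : nat, monotone_setfun f -> supermodular f ->
         decomposable r f -> decomposable r g].
Proof.
move=> g; split.
- move=> S T hST; rewrite /g => hg.
  have h0 := f_nonneg set0.
  have hS : 0 < f S by lra.
  rewrite ler_pdivlMr // mulrAC ler_pdivrMr //.
  nra.
- move=> fm; split.
    by move=> S; rewrite /g subr_ge0; apply: fm; apply: sub0set.
  by move=> A B hAB; rewrite /g lerD2r; apply: fm.
- by move=> fs A B; rewrite /g; have := fs A B; lra.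
move=> r fm fs [m [Vs [hs [hcard hnn hsup hdec]]]].
pose d i v := hs i ([set v] :&: Vs i) - hs i set0.
pose w v := \sum_(i < m) d i v.
pose e i v := (if [pick j | v \in Vs j] == Some i then w v else 0) - d i v.
have f0 : f set0 = \sum_(i < m) hs i set0.
  by rewrite hdec; apply: eq_bigr => i _; rewrite set0I.
have wE v : w v = g [set v].
  rewrite /w /g hdec f0 -sumrB; done.
have w0 v : 0 <= w v.
  by rewrite wE /g subr_ge0; apply: fm; apply: sub0set.
have F1 i v : v \notin Vs i -> e i v = 0.
  move=> nv; rewrite /e /d.
  have -> : [set v] :&: Vs i = set0.
    by apply/setP => x; rewrite !inE; case: eqP => // ->; rewrite (negbTE nv).
  case: pickP => [j /= vj|_]; last by rewrite subrr subr0.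
  case: eqP => [[ji]|_]; last by rewrite subrr subr0.
  by subst j; rewrite vj in nv.
have F2 v : \sum_(i < m) e i v = 0.
  rewrite /e sumrB.
  case: pickP => [j /= vj|/= nv].
    rewrite (bigD1 j) //= eqxx big1 ?addr0 ?subrr // => i /negbTE ij.
    by case: eqP => // [[ji]]; subst j; rewrite eqxx in ij.
  rewrite big1 // sub0r -/(w v) /w big1 ?oppr0 // => i _.
  rewrite /d.
  have -> : [set v] :&: Vs i = set0.
    by apply/setP => x; rewrite !inE; case: eqP => // ->; rewrite nv.
  by rewrite subrr.
exists m, Vs, (fun i A => hs i A - hs i set0 + \sum_(v in A) e i v).
split => //.
- move=> i A AV.
  have Hq := @q_nonneg _ _ (hs i) (Vs i) (hsup i) A AV.
  have Hp : 0 <= \sum_(v in A) (if [pick j | v \in Vs j] == Some i then w v else 0).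
    by apply: sumr_ge0 => v _; case: ifP.
  rewrite /e big_split /= sumrN -/(d i) /=.
  rewrite /d in Hq *.
  lra.
- move=> i A B AV BV.
  have := hsup i A B AV BV.
  have := @sum_modular _ _ (e i) A B.
  lra.
- move=> S; rewrite /g hdec f0.
  rewrite big_split /= sumrB.
  have -> : \sum_(i < m) \sum_(v in S :&: Vs i) e i v = 0.
    transitivity (\sum_(i < m) \sum_(v in S) e i v).
      apply: eq_bigr => i _.
      rewrite [RHS](big_setID (Vs i)) /=.
      rewrite [X in _ = _ + X]big1 ?addr0 // => v.
      by rewrite !inE => /andP [nv _]; apply: F1.
    rewrite exchange_big /=.
    by apply: big1 => v _; apply: F2.
  by rewrite addr0.
Qed.
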